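(* Let $\mathscr{V}_3$ be the variety of triples $(\mathcal{C}_1,\mathcal{C}_2,\mathcal{C}_3)$ of conics in $\mathbb{P}^3$ (over $\mathbb{C}$) that lie on a common nondegenerate quadric surface. For $\{i,j,k\}=\{1,2,3\}$ define the rational function $\alpha_i^2$ on $\mathscr{V}_3$ by $$\alpha_i^2=\frac{(\boldsymbol{\ell}_{ij}^T C_i^{*}\boldsymbol{\ell}_{ik})^2}{(\boldsymbol{\ell}_{ij}^T C_i^{*}\boldsymbol{\ell}_{ij})(\boldsymbol{\ell}_{ik}^T C_i^{*}\boldsymbol{\ell}_{ik})},$$ where, after choosing homogeneous coordinates identifying the plane $\mathcal{P}_i$ of $\mathcal{C}_i$ with $\mathbb{P}^2$, $C_i$ is a symmetric $3\times3$ matrix of $\mathcal{C}_i$, $C_i^{*}$ is its adjugate, and $\boldsymbol{\ell}_{ij},\boldsymbol{\ell}_{ik}\in\mathbb{C}^3$ are coordinate vectors of the lines $\mathcal{P}_i\cap\mathcal{P}_j$ and $\mathcal{P}_i\cap\mathcal{P}_k$ in $\mathcal{P}_i$ (the value does not depend on these choices). Then $\alpha_1^2,\alpha_2^2,\alpha_3^2$ are algebraically independent over $\mathbb{C}$.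
   Context: A conic in $\mathbb{P}^3$ is a nondegenerate conic lying in a plane; here the three planes $\mathcal{P}_1,\mathcal{P}_2,\mathcal{P}_3$ are the planes of the three conics. A line $\boldsymbol{\ell}$ in $\mathbb{P}^2$ is represented by $\boldsymbol{\ell}\in\mathbb{C}^3$ with the line being $\{\bar{x}:\boldsymbol{\ell}^T\bar{x}=0\}$; $\boldsymbol{\ell}^TC^*\boldsymbol{\ell}=0$ iff $\boldsymbol{\ell}$ is tangent to the conic $\bar{x}^TC\bar{x}=0$. A nondegenerate quadric surface is the zero set of a quadratic form in 4 variables with nonsingular matrix. *)

(* Defs.v *)
From HB Require Import structures.
From mathcomp Require Import all_boot all_order all_algebra.
From mathcomp Require Import reals.
From mathcomp Require Import complex.
From mathcomp Require Import mpoly.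

Set Implicit Arguments.
Unset Strict Implicit.
Unset Printing Implicit Defensive.

Import Order.TTheory GRing.Theory Num.Theory.
Local Open Scope ring_scope.

(* Convention: P^3 = P(C^4), a plane of P^3 is represented by a rank-3
   matrix M : 'M_(4,3) whose columns span the corresponding 3-dimensional
   subspace of C^4 (this fixes homogeneous coordinates x in C^3 on the plane,
   x |-> M x).  A conic in that plane is given by a symmetric 3x3 matrix Cm
   with nonzero determinant: its points are [M x] with x^T Cm x = 0. *)

Section Defs.
Variable K : fieldType.

Definition qform {n} (A : 'M[K]_n) (x y : 'cV[K]_n) : K := (x^T *m A *m y) 0 0.

Definition plane_conic (M : 'M[K]_(4,3)) (Cm : 'M[K]_3) : Prop :=
  \rank M = 3%N /\ Cm^T = Cm /\ \det Cm != 0.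

Definition nondeg_quadric (Q : 'M[K]_4) : Prop := Q^T = Q /\ \det Q != 0.

Definition conic_on_quadric (Q : 'M[K]_4) (M : 'M[K]_(4,3)) (Cm : 'M[K]_3) : Prop :=
  forall x : 'cV[K]_3, qform Cm x x = 0 -> qform Q (M *m x) (M *m x) = 0.

(* l is a coordinate vector (in the coordinates of plane Mi) of the line
   (plane Mi) \cap (plane Mj): the line {x | l^T x = 0} equals the set of x
   with M_i x in the span of the columns of M_j. *)
Definition line_coord (Mi Mj : 'M[K]_(4,3)) (l : 'cV[K]_3) : Prop :=
  l != 0 /\
  forall x : 'cV[K]_3, (l^T *m x) 0 0 = 0 <-> (((Mi *m x)^T) <= Mj^T)%MS.

Definition alpha2 (Cm : 'M[K]_3) (lj lk : 'cV[K]_3) : K :=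
  (qform (\adj Cm) lj lk) ^+ 2 / (qform (\adj Cm) lj lj * qform (\adj Cm) lk lk).

End Defs.

(* Main.v *)
Require Import Defs.
From HB Require Import structures.
From mathcomp Require Import all_boot all_order all_algebra.
From mathcomp Require Import reals.
From mathcomp Require Import complex.
From mathcomp Require Import mpoly.
From mathcomp Require Import zify ring lra.
Import Order.TTheory GRing.Theory Num.Theory.
Local Open Scope ring_scope.

Section Kron.
Variable F : idomainType.

Definition kexp (D : nat) (m : 'X_{1..3}) : nat :=
  (m ord0 + D * (m (@Ordinal 3 1 isT) + D * m (@Ordinal 3 2 isT)))%N.

Lemma kexp_inj (P : {mpoly F[3]}) m1 m2 :
  m1 \in msupp P -> m2 \in msupp P -> kexp (msize P) m1 = kexp (msize P) m2 -> m1 = m2.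
Proof.
move=> h1 h2; have b1 := msize_mdeg_lt h1; have b2 := msize_mdeg_lt h2.
have lt (m : 'X_{1..3}) (i : 'I_3) : (mdeg m < msize P)%N -> (m i < msize P)%N.
  move=> h; apply: leq_ltn_trans h; rewrite mdegE (bigD1 i) //=; exact: leq_addr.
set D := msize P in b1 b2 lt *; rewrite /kexp => E.
have D0 : (0 < D)%N by apply: leq_ltn_trans b1.
have dm1 a b : (a < D)%N -> ((a + D * b) %% D = a)%N.
  by move=> ha; rewrite mulnC addnC modnMDl modn_small.
have dm2 a b : (a < D)%N -> ((a + D * b) %/ D = b)%N.
  by move=> ha; rewrite mulnC addnC divnMDl // divn_small // addn0.
have E0 := congr1 (modn^~ D) E; have E1 := congr1 (divn^~ D) E.
rewrite /= !dm1 ?lt // in E0; rewrite /= !dm2 ?lt // in E1.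
have E2 := congr1 (modn^~ D) E1; have E3 := congr1 (divn^~ D) E1.
rewrite /= !dm1 ?lt // in E2; rewrite /= !dm2 ?lt // in E3.
apply/mnmP => i; case: i => [[|[|[|//]]] Hi].
- by rewrite (_ : Ordinal Hi = ord0) //; apply: val_inj.
- by rewrite (_ : Ordinal Hi = @Ordinal 3 1 isT) //; apply: val_inj.
- by rewrite (_ : Ordinal Hi = @Ordinal 3 2 isT) //; apply: val_inj.
Qed.

Definition kpoly (P : {mpoly F[3]}) : {poly F} :=
  \sum_(m <- msupp P) P@_m *: 'X^(kexp (msize P) m).

Lemma kpolyE P s : (kpoly P).[s] = P.@[fun i => s ^+ (msize P ^ i)].
Proof.
rewrite /kpoly mevalE horner_sum; apply: eq_bigr => m _.
rewrite hornerZ hornerXn; congr (_ * _).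
rewrite !big_ord_recr big_ord0 /= mul1r /kexp -!exprM -!exprD.
congr (s ^+ _); rewrite !expnS expn0 !muln1.
rewrite (_ : widen_ord _ (widen_ord _ ord_max) = ord0); last exact: val_inj.
rewrite (_ : widen_ord _ ord_max = @Ordinal 3 1 isT); last exact: val_inj.
rewrite (_ : ord_max = @Ordinal 3 2 isT); last exact: val_inj.
lia.
Qed.

Lemma kpoly_neq0 P : P != 0 -> kpoly P != 0.
Proof.
rewrite -msupp_eq0; case E: (msupp P) => [|m0 r] // _.
have m0in : m0 \in msupp P by rewrite E mem_head.
apply/negP => /eqP /(congr1 (fun q : {poly F} => q`_(kexp (msize P) m0))).
rewrite coef0 /kpoly coef_sum (bigD1_seq m0) ?msupp_uniq //= coefZ coefXn eqxx mulr1.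
rewrite big_seq_cond big1 ?addr0 => [/eqP|m /andP[hm hne]]; first by rewrite mcoeff_eq0 m0in.
rewrite coefZ coefXn; case: eqP => [/esym/(@kexp_inj P _ _ hm m0in) e|]; last by rewrite mulr0.
by rewrite e eqxx in hne.
Qed.

Lemma kron (P : {mpoly F[3]}) (f : nat -> F) : injective f -> P != 0 ->
  exists k, P.@[fun i => f k ^+ (msize P ^ i)] != 0.
Proof.
move=> finj P0; have q0 := @kpoly_neq0 P P0.
set rs := map f (iota 0 (size (kpoly P))).
have : ~~ all (root (kpoly P)) rs.
  apply/negP => hall; have := max_poly_roots q0 hall.
  rewrite map_inj_uniq ?iota_uniq // => /(_ isT).
  by rewrite size_map size_iota ltnn.
case/allPn => s /mapP [k _ ->]; rewrite /root kpolyE => h; by exists k.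
Qed.
End Kron.

Section Geo.
Variable F : fieldType.

Lemma det3g (g : nat -> nat -> F) :
  \det (\matrix_(p < 3, q < 3) g p q) =
  g 0%N 0%N * (g 1%N 1%N * g 2%N 2%N - g 1%N 2%N * g 2%N 1%N)
  - g 0%N 1%N * (g 1%N 0%N * g 2%N 2%N - g 1%N 2%N * g 2%N 0%N)
  + g 0%N 2%N * (g 1%N 0%N * g 2%N 1%N - g 1%N 1%N * g 2%N 0%N).
Proof.
rewrite (expand_det_row _ ord0) !big_ord_recr big_ord0 /= /cofactor.
rewrite !(expand_det_row _ ord0) !big_ord_recr big_ord0 /= /cofactor.
rewrite !det_mx11 !mxE /=.
rewrite !big_ord0 /bump /=. ring.
Qed.

Definition sel (w : 'I_4) : 'M[F]_(4,3) := \matrix_(r, p) (r == lift w p)%:R.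

Lemma selTmul w n (A : 'M[F]_(4,n)) p q : ((sel w)^T *m A) p q = A (lift w p) q.
Proof.
rewrite mxE (bigD1 (lift w p)) //= !mxE eqxx mul1r big1 ?addr0 // => r hr.
by rewrite !mxE (negbTE hr) mul0r.
Qed.

Lemma mulsel w n (A : 'M[F]_(n,4)) r p : (A *m sel w) r p = A r (lift w p).
Proof.
rewrite mxE (bigD1 (lift w p)) //= !mxE eqxx mulr1 big1 ?addr0 // => s hs.
by rewrite !mxE (negbTE hs) mulr0.
Qed.

Lemma selTsel w : (sel w)^T *m sel w = 1%:M.
Proof.
apply/matrixP => p q; rewrite selTmul !mxE (inj_eq (@lift_inj _ w)).
by case: eqP.
Qed.

Lemma rank_sel w : \rank (sel w) = 3%N.
Proof.
apply/eqP; rewrite eqn_leq rank_leq_col /=.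
have := mxrankM_maxl (sel w)^T (sel w); rewrite selTsel mxrank1 mxrank_tr.
done.
Qed.

Lemma selselT w r s : (sel w *m (sel w)^T) r s = ((r == s) && (r != w))%:R.
Proof.
rewrite mxE; case: (unliftP w r) => [p ->|->].
  rewrite (bigD1 p) //= !mxE eqxx mul1r big1 ?addr0.
    rewrite lift_eqF andbT; case: eqP => [<-|/eqP]; first by rewrite eqxx.
    by rewrite eq_sym => /negbTE ->.
  by move=> q hq; rewrite !mxE (inj_eq (@lift_inj _ w)) eq_sym (negbTE hq) mul0r.
rewrite eqxx andbF big1 // => q _; rewrite !mxE eq_sym lift_eqF mul0r //.
Qed.

Lemma sub_sel w (v : 'rV[F]_4) : (v <= (sel w)^T)%MS <-> v 0 w = 0.
Proof.
split.
  case/submxP => D ->.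
  have -> : D *m (sel w)^T = (D *m (sel w)^T *m sel w) *m (sel w)^T.
    by rewrite -(mulmxA D) selTsel mulmx1.
  rewrite -mulmxA mxE big1 // => r _; rewrite selselT.
  by case: eqP; rewrite ?andbF ?mulr0.
move=> v0; apply/submxP; exists (v *m sel w); apply/matrixP => i c.
rewrite -mulmxA mxE (bigD1 c) //= selselT eqxx /= big1 ?addr0.
  by case: eqP => [->|]; rewrite ?v0 ?mulr0 ?mulr1 // ord1.
by move=> r hr; rewrite selselT (negbTE hr) mulr0.
Qed.


Definition qf (x : nat -> F) (r s : nat) : F :=
  if r == s then 1 else if (r == 3)%N || (s == 3)%N then 0 else x (3 - r - s)%N.
Definition Qm x : 'M[F]_4 := \matrix_(r, s) qf x r s.
Definition Nf (y : F) (p q : nat) : F :=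
  if p == q then 1 else if (p == 2)%N || (q == 2)%N then 0 else y.
Definition Nm y : 'M[F]_3 := \matrix_(p, q) Nf y p q.
Definition pl (i : 'I_3) : 'I_4 := widen_ord (leqnSn 3) i.

Lemma CmE x i : (sel (pl i))^T *m Qm x *m sel (pl i) = Nm (x i).
Proof.
apply/matrixP => p q; rewrite mulsel selTmul !mxE.
case: i => [[|[|[|//]]] Hi]; case: p => [[|[|[|//]]] Hp]; case: q => [[|[|[|//]]] Hq];
  exact: erefl.
Qed.

Lemma NmT y : (Nm y)^T = Nm y.
Proof.
apply/matrixP => p q; rewrite !mxE.
case: p => [[|[|[|//]]] Hp]; case: q => [[|[|[|//]]] Hq]; exact: erefl.
Qed.

Lemma QmT x : (Qm x)^T = Qm x.
Proof.
apply/matrixP => p q; rewrite !mxE.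
case: p => [[|[|[|[|//]]]] Hp]; case: q => [[|[|[|[|//]]]] Hq]; exact: erefl.
Qed.

Lemma det_Nm y : \det (Nm y) = 1 - y ^+ 2.
Proof. rewrite det3g /Nf /=; ring. Qed.

Lemma det_Qm x : \det (Qm x) = 1 + 2 * (x 0%N * x 1%N * x 2%N) - x 0%N ^+ 2 - x 1%N ^+ 2 - x 2%N ^+ 2.
Proof.
rewrite (expand_det_col _ ord_max) !big_ord_recr big_ord0 /= !mxE /=.
rewrite /cofactor.
have -> : row' ord_max (col' ord_max (Qm x)) = \matrix_(p < 3, q < 3) qf x p q.
  by apply/matrixP => p q; rewrite !mxE !lift_max.
rewrite det3g /qf /=.
rewrite -[(3-1-2)%N]/0%N -[(3-2-1)%N]/0%N -[(3-0-1)%N]/2%N -[(3-1-0)%N]/2%N.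
rewrite -[(3-0-2)%N]/1%N -[(3-2-0)%N]/1%N.
rewrite !mul0r !add0r; ring.
Qed.


Lemma adj_Nm y (p q : 'I_3) : (p < 2)%N -> (q < 2)%N ->
  \adj (Nm y) p q = if p == q then 1 else - y.
Proof.
case: p => [[|[|//]] Hp]; case: q => [[|[|//]] Hq] _ _;
rewrite mxE /cofactor (expand_det_row _ ord0) !big_ord_recr big_ord0 /= /cofactor !det_mx11 !mxE /bump /=;
rewrite /Nf /=; ring.
Qed.

Definition ev (j : 'I_4) : 'cV[F]_4 := \col_r (r == j)%:R.
Definition u3 (k : 'I_3) : 'cV[F]_3 := \col_r (r == k)%:R.
Definition li (i j : 'I_3) : 'cV[F]_3 := (sel (pl i))^T *m ev (pl j).

Lemma liE i j k : lift (pl i) k = pl j -> li i j = u3 k.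
Proof.
move=> E; apply/matrixP => p c; rewrite selTmul !mxE -E (inj_eq (@lift_inj _ _)).
done.
Qed.

Lemma rowcol n (u : 'cV[F]_n) (v : 'cV[F]_n) k :
  u = \col_r (r == k)%:R -> (u^T *m v) 0 0 = v k 0.
Proof.
move=> ->; rewrite mxE (bigD1 k) //= !mxE eqxx mul1r big1 ?addr0 // => r hr.
by rewrite !mxE (negbTE hr) mul0r.
Qed.

Lemma qform_u3 (A : 'M[F]_3) a b : qform A (u3 a) (u3 b) = A a b.
Proof.
rewrite /qform -mulmxA (@rowcol _ (u3 a) _ a) // mxE (bigD1 b) //= !mxE eqxx mulr1.
by rewrite big1 ?addr0 // => r hr; rewrite !mxE (negbTE hr) mulr0.
Qed.

Lemma li_ex i j : i != j -> exists2 k, li i j = u3 k & (k < 2)%N.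
Proof.
case: i => [[|[|[|//]]] Hi]; case: j => [[|[|[|//]]] Hj] //= _.
- by exists (@Ordinal 3 0 isT) => //; apply: liE; apply: val_inj.
- by exists (@Ordinal 3 1 isT) => //; apply: liE; apply: val_inj.
- by exists (@Ordinal 3 0 isT) => //; apply: liE; apply: val_inj.
- by exists (@Ordinal 3 1 isT) => //; apply: liE; apply: val_inj.
- by exists (@Ordinal 3 0 isT) => //; apply: liE; apply: val_inj.
- by exists (@Ordinal 3 1 isT) => //; apply: liE; apply: val_inj.
Qed.

Lemma li_line i j : i != j -> line_coord (sel (pl i)) (sel (pl j)) (li i j).
Proof.
move=> ij; split.
  case: (@li_ex i j ij) => k -> _; apply/eqP => /matrixP /(_ k 0).
  by rewrite !mxE eqxx => /eqP; rewrite oner_eq0.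
move=> v; rewrite sub_sel /li trmx_mul trmxK -mulmxA.
rewrite (@rowcol _ (ev (pl j)) _ (pl j)) // !mxE.
done.
Qed.


Lemma alpha_Nm y (a b : 'I_3) : (a < 2)%N -> (b < 2)%N -> a != b ->
  alpha2 (Nm y) (u3 a) (u3 b) = y ^+ 2.
Proof.
move=> ha hb ab; rewrite /alpha2 !qform_u3 !adj_Nm // !eqxx (negbTE ab).
by rewrite mulr1 divr1 sqrrN.
Qed.

Lemma alpha_li x (i : 'I_3) :
  alpha2 ((sel (pl i))^T *m Qm x *m sel (pl i)) (li i (ordS i)) (li i (ordS (ordS i)))
  = x i ^+ 2.
Proof.
rewrite CmE.
case: i => [[|[|[|//]]] Hi].
- rewrite (@liE _ _ (@Ordinal 3 0 isT)); last exact: val_inj.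
  rewrite (@liE _ _ (@Ordinal 3 1 isT)); last exact: val_inj.
  exact: alpha_Nm.
- rewrite (@liE _ _ (@Ordinal 3 1 isT)); last exact: val_inj.
  rewrite (@liE _ _ (@Ordinal 3 0 isT)); last exact: val_inj.
  exact: alpha_Nm.
- rewrite (@liE _ _ (@Ordinal 3 0 isT)); last exact: val_inj.
  rewrite (@liE _ _ (@Ordinal 3 1 isT)); last exact: val_inj.
  exact: alpha_Nm.
Qed.

Lemma construct (x : nat -> F) :
  (forall i : 'I_3, 1 - x i ^+ 2 != 0) ->
  1 + 2 * (x 0%N * x 1%N * x 2%N) - x 0%N ^+ 2 - x 1%N ^+ 2 - x 2%N ^+ 2 != 0 ->
  [/\ nondeg_quadric (Qm x),
      (forall i, plane_conic (sel (pl i)) ((sel (pl i))^T *m Qm x *m sel (pl i)) /\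
                 conic_on_quadric (Qm x) (sel (pl i)) ((sel (pl i))^T *m Qm x *m sel (pl i))),
      (forall i j, i != j -> line_coord (sel (pl i)) (sel (pl j)) (li i j)),
      (forall i j, i != j -> qform (\adj ((sel (pl i))^T *m Qm x *m sel (pl i))) (li i j) (li i j) != 0) &
      (forall i, alpha2 ((sel (pl i))^T *m Qm x *m sel (pl i)) (li i (ordS i)) (li i (ordS (ordS i)))
        = x i ^+ 2)].
Proof.
move=> hx hQ; split.
- by split; [exact: QmT | rewrite det_Qm].
- move=> i; split.
    by split; [exact: rank_sel | split; [rewrite CmE NmT | rewrite CmE det_Nm]].
  by move=> v; rewrite /qform trmx_mul !mulmxA.
- exact: li_line.
- move=> i j ij; case: (@li_ex i j ij) => k -> hk.
  by rewrite qform_u3 CmE adj_Nm // eqxx oner_eq0.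
- exact: alpha_li.
Qed.

End Geo.

Lemma rpow_le (R : realType) (r : R) n : 0 <= r -> r <= 1 -> (0 < n)%N -> r ^+ n <= r.
Proof.
move=> r0 r1; case: n => // m _; rewrite exprS; apply: ler_piMr => //.
exact: exprn_ile1.
Qed.

Theorem mainTheorem4 (R : realType) (P : {mpoly R[i][3]}) :
  P != 0 ->
  exists (Q : 'M[R[i]]_4) (M : 'I_3 -> 'M[R[i]]_(4,3)) (Cm : 'I_3 -> 'M[R[i]]_3)
         (l : 'I_3 -> 'I_3 -> 'cV[R[i]]_3),
    [/\ nondeg_quadric Q,
        (forall i, plane_conic (M i) (Cm i) /\ conic_on_quadric Q (M i) (Cm i)),
        (forall i j, i != j -> line_coord (M i) (M j) (l i j)),
        (forall i j, i != j -> qform (\adj (Cm i)) (l i j) (l i j) != 0) &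
        P.@[fun i => alpha2 (Cm i) (l i (ordS i)) (l i (ordS (ordS i)))] != 0].
Proof.
move=> P0.
pose rk (k : nat) : R := ((k + 3)%:R)^-1.
have rk_pos k : 0 < rk k by rewrite invr_gt0 ltr0n addn3.
have rk_le k : rk k <= 3^-1.
  rewrite lef_pV2 ?posrE ?ltr0n ?addn3 // ler_nat; lia.
pose f (k : nat) : R[i] := real_complex R ((rk k) ^+ 2).
have finj : injective f.
  move=> a b /complexI /eqP; rewrite eqrXn2 ?ltW // => /eqP /invr_inj /eqP.
  by rewrite eqr_nat => /eqP; lia.
have [k hk] := @kron _ P f finj P0.
set D := msize P in hk.
have D0 : (0 < D)%N by rewrite lt0n msize_poly_eq0.
pose xr (n : nat) : R := rk k ^+ (D ^ n).
pose x (n : nat) : R[i] := real_complex R (xr n).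
have xr0 n : 0 <= xr n by rewrite exprn_ge0 // ltW.
have xr1 n : xr n <= 3^-1.
  apply: (le_trans _ (rk_le k)); apply: rpow_le; rewrite ?expn_gt0 ?D0 ?ltW //.
  by apply: (le_lt_trans (rk_le k)); rewrite invf_lt1 ?ltr0n // ltr1n.
have hx : forall i : 'I_3, 1 - x i ^+ 2 != 0.
  move=> i; have -> : 1 - x i ^+ 2 = real_complex R (1 - xr i ^+ 2).
    by rewrite /x; move: (xr i) => a; rewrite rmorphB rmorph1 rmorphXn.
  rewrite fmorph_eq0; have h0 := xr0 i; have h1 : 3 * xr i <= 1.
    by have := xr1 i; lra.
  rewrite lt0r_neq0 //; nra.
have hQ : 1 + 2 * (x 0%N * x 1%N * x 2%N) - x 0%N ^+ 2 - x 1%N ^+ 2 - x 2%N ^+ 2 != 0.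
  have -> : 1 + 2 * (x 0%N * x 1%N * x 2%N) - x 0%N ^+ 2 - x 1%N ^+ 2 - x 2%N ^+ 2
     = real_complex R (1 + 2 * (xr 0%N * xr 1%N * xr 2%N) - xr 0%N ^+ 2 - xr 1%N ^+ 2 - xr 2%N ^+ 2).
    rewrite /x; move: (xr 0%N) (xr 1%N) (xr 2%N) => a b c.
    by rewrite !(rmorphB, rmorphD, rmorphM, rmorphXn, rmorph1, rmorph_nat).
  have sq n : 9 * xr n ^+ 2 <= 1.
    have h0 := xr0 n; have h1 : 3 * xr n <= 1.
      by have := xr1 n; lra.
    nra.
  have e1 : 0 <= xr 0%N * xr 1%N * xr 2%N by rewrite !mulr_ge0.
  have := sq 0%N; have := sq 1%N; have := sq 2%N.
  move: e1; move: (xr 0%N) (xr 1%N) (xr 2%N) => a b c e1 s1 s2 s3.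
  rewrite fmorph_eq0 lt0r_neq0 //; lra.
have [h1 h2 h3 h4 h5] := @construct _ x hx hQ.
exists (Qm _ x), (fun i => sel _ (pl i)), (fun i => (sel _ (pl i))^T *m Qm _ x *m sel _ (pl i)), (li _).
split => //.
rewrite (@meval_eq _ _ _ (fun i => f k ^+ (D ^ i))) // => i.
rewrite h5 /x /f.
by rewrite -!rmorphXn /xr -!exprM mulnC.
Qed.
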